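(* For all $i\in[1,n-1]$, $j'(i)\le j'(i+1)$.
   Context: Let $v_1,\dots,v_n$ be points of a metric space with metric $|\cdot|$ (symmetric, nonnegative, $|v_iv_j|=0$ iff $i=j$, triangle inequality). For $i\le j$ let $d_P(v_i,v_j)=\sum_{k=i}^{j-1}|v_kv_{k+1}|$ and $d_P(v_j,v_i)=d_P(v_i,v_j)$. For $1\le i\le j\le n$: $\beta(i,j)=\max_{k\in[i,j]}\min\{d_P(v_i,v_k),|v_iv_j|+d_P(v_k,v_j)\}$; $\gamma(i,j)=|v_iv_j|+d_P(v_j,v_n)$ if $j<n$ and $\gamma(i,n)=0$. For $i\in[1,n]$, $j'(i)$ is the smallest index $j\in[i,n]$ with $\gamma(i,j)\le\beta(i,j)$. *)

(* Defs.v *)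
From Stdlib Require Import Reals Lra Lia List Arith.
Open Scope R_scope.

Definition sum_range (a b : nat) (f : nat -> R) : R :=
  fold_right (fun k acc => f k + acc) 0 (seq a (b - a)).

Section Defs.
Variables (X : Type) (d : X -> X -> R) (n : nat) (v : nat -> X).

Definition dP (i j : nat) : R :=
  sum_range (Nat.min i j) (Nat.max i j) (fun k => d (v k) (v (S k))).

(* beta(i,j) = max_{k in [i,j]} min{ d_P(v_i,v_k), |v_i v_j| + d_P(v_k,v_j) } *)
Definition beta_term (i j k : nat) : R :=
  Rmin (dP i k) (d (v i) (v j) + dP k j).

Definition beta (i j : nat) : R :=
  fold_right (fun k acc => Rmax (beta_term i j k) acc) (beta_term i j i)
             (seq i (S j - i)).

Definition gamma (i j : nat) : R :=
  if (j <? n)%nat then d (v i) (v j) + dP j n else 0.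

Fixpoint first_from (P : nat -> bool) (j fuel : nat) : nat :=
  match fuel with
  | O => j
  | S f => if P j then j else first_from P (S j) f
  end.

Definition goodb (i j : nat) : bool :=
  if Rle_dec (gamma i j) (beta i j) then true else false.

(* j'(i): smallest j in [i,n] with gamma(i,j) <= beta(i,j).
   The search over [i, n-1] defaults to n, which always qualifies since
   gamma(i,n) = 0 <= beta(i,n). *)
Definition jprime (i : nat) : nat := first_from (goodb i) i (n - i).

End Defs.

(* Main.v *)
Require Import Defs.
From Stdlib Require Import Reals Lra Lia List Arith.
Open Scope R_scope.

Lemma ff_bound (P : nat -> bool) fuel : forall j,
  (j <= first_from P j fuel <= j + fuel)%nat /\
  ((first_from P j fuel < j + fuel)%nat -> P (first_from P j fuel) = true).
Proof.
  induction fuel as [|f IH]; intros j; simpl.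
  - split; [lia|intros; lia].
  - destruct (P j) eqn:E.
    + split; [lia|auto].
    + destruct (IH (S j)) as [H1 H2]. split; [lia|].
      intros H. apply H2. lia.
Qed.

Lemma ff_le (P : nat -> bool) fuel : forall j j0,
  P j0 = true -> (j <= j0 < j + fuel)%nat -> (first_from P j fuel <= j0)%nat.
Proof.
  induction fuel as [|f IH]; intros j j0 HP Hr; simpl.
  - lia.
  - destruct (P j) eqn:E; [lia|].
    destruct (Nat.eq_dec j j0) as [->|Hne]; [congruence|].
    apply IH; auto; lia.
Qed.

Lemma fold_ge (f : nat -> R) a l :
  f a <= fold_right (fun k acc => Rmax (f k) acc) (f a) l /\
  (forall k, In k l -> f k <= fold_right (fun k acc => Rmax (f k) acc) (f a) l).
Proof.
  induction l as [|x l [IH1 IH2]]; simpl.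
  - split; [lra|tauto].
  - split.
    + eapply Rle_trans; [apply IH1|apply Rmax_r].
    + intros k [->|Hk]; [apply Rmax_l|].
      eapply Rle_trans; [apply IH2; auto|apply Rmax_r].
Qed.

Lemma fold_att (f : nat -> R) a l c :
  c <= fold_right (fun k acc => Rmax (f k) acc) (f a) l ->
  c <= f a \/ exists k, In k l /\ c <= f k.
Proof.
  induction l as [|x l IH]; simpl; intros H.
  - auto.
  - unfold Rmax in H. destruct (Rle_dec (f x) _).
    + destruct (IH H) as [?|[k [? ?]]]; [auto|right; exists k; auto].
    + right; exists x; auto.
Qed.

Lemma sum_range_S a b f : (a < b)%nat ->
  sum_range a b f = f a + sum_range (S a) b f.
Proof.
  intros H. unfold sum_range.
  replace (b - a)%nat with (S (b - S a)) by lia. reflexivity.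
Qed.

Theorem lemma5 (X : Type) (d : X -> X -> R)
  (d_nonneg : forall x y, 0 <= d x y)
  (d_sym : forall x y, d x y = d y x)
  (d_zero : forall x y, d x y = 0 <-> x = y)
  (d_tri : forall x y z, d x z <= d x y + d y z)
  (n : nat) (v : nat -> X)
  (v_distinct : forall i j, (1 <= i <= n)%nat -> (1 <= j <= n)%nat ->
                 v i = v j -> i = j)
  (i : nat) (Hi : (1 <= i <= n - 1)%nat) :
  (jprime X d n v i <= jprime X d n v (S i))%nat.
Proof.
  unfold jprime.
  set (j0 := first_from (goodb X d n v (S i)) (S i) (n - S i)).
  destruct (ff_bound (goodb X d n v (S i)) (n - S i) (S i)) as [B1 B2].
  fold j0 in B1, B2.
  destruct (ff_bound (goodb X d n v i) (n - i) i) as [C1 _].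
  destruct (Nat.eq_dec j0 n) as [Heq|Hne]; [lia|].
  assert (Hg : goodb X d n v (S i) j0 = true) by (apply B2; lia).
  apply ff_le; [|lia].
  unfold goodb in *.
  destruct (Rle_dec (gamma X d n v (S i) j0) (beta X d v (S i) j0)) as [G|]; [|discriminate].
  destruct (Rle_dec (gamma X d n v i j0) (beta X d v i j0)) as [|NG]; [reflexivity|exfalso; apply NG].
  unfold gamma in *. assert (Hlt : (j0 <? n)%nat = true) by (apply Nat.ltb_lt; lia).
  rewrite Hlt in *.
  unfold beta in *.
  apply fold_att in G.
  assert (exists k, (S i <= k <= j0)%nat /\
     d (v (S i)) (v j0) + dP X d v j0 n <= beta_term X d v (S i) j0 k) as [k [Hk Hle]].
  { destruct G as [G|[k [Hin G]]]; [exists (S i); split; [lia|auto]|].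
    apply in_seq in Hin. exists k; split; [lia|auto]. }
  destruct (fold_ge (beta_term X d v i j0) i (seq i (S j0 - i))) as [_ F].
  eapply Rle_trans; [|apply (F k); apply in_seq; lia].
  unfold beta_term in *.
  assert (Hd1 : dP X d v i k = d (v i) (v (S i)) + dP X d v (S i) k).
  { unfold dP. rewrite !Nat.min_l by lia. rewrite !Nat.max_r by lia.
    apply sum_range_S; lia. }
  rewrite Hd1.
  pose proof (d_tri (v i) (v (S i)) (v j0)).
  pose proof (Rmin_l (dP X d v (S i) k) (d (v (S i)) (v j0) + dP X d v k j0)).
  pose proof (Rmin_r (dP X d v (S i) k) (d (v (S i)) (v j0) + dP X d v k j0)).
  apply Rmin_glb; lra.
Qed.
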